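(* For objects $V,W$ of $\mathcal{E}_q^{deg}$, $$\mathrm{Hom}_{\mathcal{F}_{iso}}(iso_V,iso_W)\cong\begin{cases}\mathbb{F}_2[O(V)]&\text{if }W\cong V,\\0&\text{otherwise,}\end{cases}$$ where $O(V)$ is the group of isometries of $V$.
   Context: $\mathcal{E}$: all $\mathbb{F}_2$-vector spaces. $\mathcal{E}_q^{deg}$: objects finite-dimensional quadratic spaces over $\mathbb{F}_2$ (possibly degenerate), morphisms injective linear maps preserving quadratic forms. $\mathrm{Sp}(\mathcal{E}_q^{deg})$: same objects, morphisms spans $[V\leftarrow D\rightarrow W]$ up to iso of $D$, composed by pullback. $\mathcal{F}_{iso}=\mathrm{Func}(\mathrm{Sp}(\mathcal{E}_q^{deg}),\mathcal{E})$. $Q_V=\mathbb{F}_2[\mathrm{Hom}_{\mathrm{Sp}(\mathcal{E}_q^{deg})}(V,-)]$; $D F=(-)^*\circ F\circ tr^{op}$ with $tr[V\leftarrow X\rightarrow W]=[W\leftarrow X\rightarrow V]$; $a_V:Q_V\to DQ_V$ corresponds by Yoneda to the linear form on $\mathbb{F}_2[\mathrm{End}(V)]$ equal to $1$ on $\mathrm{Id}_V$ and $0$ on all other basis elements; the isotropic functor $iso_V$ is the image of $a_V$. *)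

(* Defs.v *)
From HB Require Import structures.
From mathcomp Require Import all_boot all_order all_algebra.
Set Implicit Arguments. Unset Strict Implicit. Unset Printing Implicit Defensive.
Import GRing.Theory.
Local Open Scope ring_scope.

(* Ground field F_2; vectors of an n-dimensional space are row vectors 'rV_n,
   linear maps are x |-> x *m A. *)
Notation F2 := 'F_2.

Definition polar n (q : 'rV[F2]_n -> F2) (x y : 'rV[F2]_n) : F2 :=
  q (x + y) - q x - q y.

Definition is_quadratic n (q : 'rV[F2]_n -> F2) : Prop :=
  (forall (a : F2) x, q (a *: x) = a ^+ 2 * q x) /\
  (forall x x' y, polar q (x + x') y = polar q x y + polar q x' y) /\
  (forall (a : F2) x y, polar q (a *: x) y = a * polar q x y).

(* Objects of E_q^deg : finite-dimensional quadratic spaces over F_2. *)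
Record qspace := QSpace {
  qdim : nat;
  qform : 'rV[F2]_qdim -> F2;
  qform_quad : is_quadratic qform }.
Arguments qform : clear implicits.

Definition vec (V : qspace) := 'rV[F2]_(qdim V).

Definition is_Emor (V W : qspace) (A : 'M[F2]_(qdim V, qdim W)) : Prop :=
  row_free A /\ forall x : vec V, qform W (x *m A) = qform V x.

Arguments is_Emor : clear implicits.
Definition qiso (V W : qspace) : Prop :=
  exists (A : 'M[F2]_(qdim V, qdim W)) (B : 'M[F2]_(qdim W, qdim V)),
    [/\ is_Emor V W A, is_Emor W V B, A *m B = 1%:M & B *m A = 1%:M].

Definition isometryb (V : qspace) (A : 'M[F2]_(qdim V)) : bool :=
  (A \in unitmx) && [forall x : vec V, qform V (x *m A) == qform V x].
Definition Ortho (V : qspace) := {A : 'M[F2]_(qdim V) | isometryb A}.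

(* An isomorphism class of spans [V <- D -> W] (legs injective isometries) is
   encoded by the image of D in V x W: a subspace S of V x W on which both
   projections are injective and q_V(p1 s) = q_W(p2 s) (this is the form of D).
   Composition by pullback is then relational composition. *)
Definition spanb (V W : qspace) (S : {set vec V * vec W}) : bool :=
  [&& ((0 : vec V), (0 : vec W)) \in S,
      [forall s in S, forall t in S, (s.1 + t.1, s.2 + t.2) \in S],
      [forall y : vec W, (((0 : vec V), y) \in S) ==> (y == 0)],
      [forall x : vec V, ((x, (0 : vec W)) \in S) ==> (x == 0)] &
      [forall s in S, qform V s.1 == qform W s.2]].

Definition Hom (V W : qspace) := {S : {set vec V * vec W} | spanb S}.

Definition relcomp (A B C : finType) (S : {set A * B}) (T : {set B * C})
  : {set A * C} :=
  [set p | [exists b, ((p.1, b) \in S) && ((b, p.2) \in T)]].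

Definition trset (A B : finType) (S : {set A * B}) : {set B * A} :=
  [set p | (p.2, p.1) \in S].

Definition diagset (A : finType) : {set A * A} := [set p | p.1 == p.2].

Record fdata := FData {
  Fobj : qspace -> vectType F2;
  Fmor : forall X Y : qspace, Hom X Y -> Fobj X -> Fobj Y }.

Definition natfam (F G : fdata) := forall X : qspace, Fobj F X -> Fobj G X.

Definition is_nat (F G : fdata) (eta : natfam F G) : Prop :=
  (forall X, linear (eta X)) /\
  (forall X Y (T : Hom X Y) (x : Fobj F X),
      eta Y (Fmor T x) = Fmor T (eta X x)).

(* Q_V(X) = F_2[Hom(V,X)], functions Hom(V,X) -> F_2 (basis: Dirac functions). *)
Definition QVobj (V X : qspace) : vectType F2 := {ffun Hom V X -> F2^o}.

(* action of a span T : X -> Y (given by its set) : [S] |-> [S ; T] *)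
Definition QVact (V X Y : qspace) (T : {set vec X * vec Y}) (f : QVobj V X)
  : QVobj V Y :=
  [ffun R : Hom V Y => \sum_(S : Hom V X | relcomp (val S) T == val R) f S].

Arguments QVact : clear implicits.

(* D Q_V (X) = Q_V(X)^*, with D Q_V(T) = (Q_V(tr T))^* *)
Definition DQobj (V X : qspace) : vectType F2 := 'Hom(QVobj V X, F2^o).

Definition DQact (V X Y : qspace) (T : Hom X Y) (l : DQobj V X) : DQobj V Y :=
  linfun (fun g : QVobj V Y => l (QVact V Y X (trset (val T)) g)).

Arguments DQact : clear implicits.

Definition phiV (V : qspace) : DQobj V V :=
  linfun (fun g : QVobj V V =>
            \sum_(S : Hom V V | val S == diagset (vec V)) g S).

(* a_V : Q_V -> D Q_V, the map corresponding to phiV by Yoneda: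
   [S] |-> D Q_V(S)(phiV) *)
Definition aV (V X : qspace) : 'Hom(QVobj V X, DQobj V X) :=
  linfun (fun f : QVobj V X =>
            \sum_(S : Hom V X) (f S : F2) *: DQact V V X S (phiV V)).

Definition isoSp (V X : qspace) : {vspace DQobj V X} := limg (aV V X).

Definition isoobj (V X : qspace) : vectType F2 := subvs_of (isoSp V X).

Definition isomor (V X Y : qspace) (T : Hom X Y) (x : isoobj V X)
  : isoobj V Y :=
  vsproj (isoSp V Y) (DQact V X Y T (vsval x)).

Definition isoF (V : qspace) : fdata := FData (@isomor V).

(* Main.v *)
Require Import Defs.
From HB Require Import structures.
From mathcomp Require Import all_boot all_order all_algebra.
Set Implicit Arguments. Unset Strict Implicit. Unset Printing Implicit Defensive.
Import GRing.Theory.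
Local Open Scope ring_scope.
Local Notation vec := Defs.vec.
Local Notation Hom := Defs.Hom.

Lemma lfunE_lin (aT rT : vectType F2) (f : aT -> rT) :
  linear f -> forall u, linfun f u = f u.
Proof.
move=> fL u.
pose fM := GRing.isLinear.Build F2 aT rT *:%R f fL.
pose F : {linear aT -> rT} := HB.pack f fM.
exact: (lfunE F u).
Qed.

Lemma F2cases (a : F2) : a = 0 \/ a = 1.
Proof. by case: a => [[|[|n]]] //= Hn; [left|right]; apply: val_inj. Qed.

Lemma F2char : 2%N \in [pchar F2].
Proof. exact: pchar_Fp. Qed.

Lemma addF2vv n (x : 'rV[F2]_n) : x + x = 0.
Proof. by apply/matrixP=> i j; rewrite !mxE (addrr_pchar2 F2char). Qed.

Lemma addv_eq0 n (x y : 'rV[F2]_n) : x + y = 0 -> x = y.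
Proof. by move=> H; rewrite -[x]addr0 -(addF2vv y) addrA H add0r. Qed.


Lemma span0 (X Y : qspace) (S : Hom X Y) : ((0 : vec X), (0 : vec Y)) \in val S.
Proof. by case: S => S /= /and5P[]. Qed.

Lemma spanD (X Y : qspace) (S : Hom X Y) a b c d :
  (a, b) \in val S -> (c, d) \in val S -> (a + c, b + d) \in val S.
Proof.
case: S => S /= /and5P[_ /forallP H _ _ _] Hab Hcd.
by have /implyP/(_ Hab)/forallP/(_ (c,d))/implyP/(_ Hcd) := H (a,b).
Qed.

Lemma spanl (X Y : qspace) (S : Hom X Y) y : ((0 : vec X), y) \in val S -> y = 0.
Proof.
case: S => S /= /and5P[_ _ /forallP H _ _] Hy.
by have /implyP/(_ Hy)/eqP := H y.
Qed.

Lemma spanr (X Y : qspace) (S : Hom X Y) x : (x, (0 : vec Y)) \in val S -> x = 0.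
Proof.
case: S => S /= /and5P[_ _ _ /forallP H _] Hy.
by have /implyP/(_ Hy)/eqP := H x.
Qed.

Lemma spanq (X Y : qspace) (S : Hom X Y) x y :
  (x, y) \in val S -> qform Y y = qform X x.
Proof.
case: S => S /= /and5P[_ _ _ _ /forallP H] Hy.
by have /implyP/(_ Hy)/eqP := H (x,y).
Qed.

Lemma spanbP (X Y : qspace) (S : {set vec X * vec Y}) :
  ((0 : vec X), (0 : vec Y)) \in S ->
  (forall a b c d, (a, b) \in S -> (c, d) \in S -> (a + c, b + d) \in S) ->
  (forall y, ((0 : vec X), y) \in S -> y = 0) ->
  (forall x, (x, (0 : vec Y)) \in S -> x = 0) ->
  (forall x y, (x, y) \in S -> qform X x = qform Y y) -> spanb S.
Proof.
move=> H0 HD Hl Hr Hq; apply/and5P; split=> //.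
- apply/forallP=> -[a b]; apply/implyP=> Hab; apply/forallP=> -[c d]; apply/implyP.
  exact: HD.
- by apply/forallP=> y; apply/implyP=> /Hl ->.
- by apply/forallP=> y; apply/implyP=> /Hr ->.
- by apply/forallP=> -[x y]; apply/implyP=> /Hq ->.
Qed.

Lemma in_relcomp (A B C : finType) (S : {set A * B}) (T : {set B * C}) a c :
  ((a, c) \in relcomp S T) = [exists b, ((a, b) \in S) && ((b, c) \in T)].
Proof. by rewrite inE. Qed.

Lemma in_trset (A B : finType) (S : {set A * B}) a b :
  ((b, a) \in trset S) = ((a, b) \in S).
Proof. by rewrite inE. Qed.

Lemma in_diag (A : finType) (a b : A) : ((a, b) \in diagset A) = (a == b).
Proof. by rewrite inE. Qed.

Lemma relcomp_spanb (X Y Z : qspace) (S : Hom X Y) (T : Hom Y Z) :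
  spanb (relcomp (val S) (val T)).
Proof.
apply: spanbP.
- by rewrite in_relcomp; apply/existsP; exists 0; rewrite !span0.
- move=> a b c d; rewrite !in_relcomp => /existsP[y /andP[H1 H2]] /existsP[y' /andP[H3 H4]].
  by apply/existsP; exists (y + y'); rewrite (spanD H1 H3) (spanD H2 H4).
- move=> z; rewrite in_relcomp => /existsP[y /andP[H1 H2]].
  by move: H2; rewrite (spanl H1) => /spanl.
- move=> x; rewrite in_relcomp => /existsP[y /andP[H1 H2]].
  by move: H1; rewrite (spanr H2) => /spanr.
- move=> x z; rewrite in_relcomp => /existsP[y /andP[H1 H2]].
  by rewrite -(spanq H1) (spanq H2).
Qed.

Definition compH (X Y Z : qspace) (S : Hom X Y) (T : Hom Y Z) : Hom X Z :=
  @exist _ (fun s => spanb s) _ (relcomp_spanb S T).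

Lemma trset_spanb (X Y : qspace) (S : Hom X Y) : spanb (trset (val S)).
Proof.
apply: spanbP.
- by rewrite in_trset span0.
- by move=> a b c d; rewrite !in_trset; apply: spanD.
- by move=> y; rewrite in_trset => /spanr.
- by move=> y; rewrite in_trset => /spanl.
- by move=> x y; rewrite in_trset => /spanq.
Qed.

Definition trH (X Y : qspace) (S : Hom X Y) : Hom Y X := @exist _ (fun s => spanb s) _ (trset_spanb S).

Lemma diag_spanb (X : qspace) : spanb (diagset (vec X)).
Proof.
apply: spanbP.
- by rewrite in_diag.
- by move=> a b c d; rewrite !in_diag => /eqP-> /eqP->.
- by move=> y; rewrite in_diag => /eqP.
- by move=> y; rewrite in_diag => /eqP.
- by move=> x y; rewrite in_diag => /eqP->.
Qed.

Definition idH (X : qspace) : Hom X X := @exist _ (fun s => spanb s) _ (diag_spanb X).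

Lemma relcompA (A B C D : finType) (S : {set A * B}) (T : {set B * C}) (U : {set C * D}) :
  relcomp (relcomp S T) U = relcomp S (relcomp T U).
Proof.
apply/setP=> -[a d]; rewrite !in_relcomp; apply/existsP/existsP.
- move=> [c /andP[]]; rewrite in_relcomp => /existsP[b /andP[H1 H2]] H3.
  by exists b; rewrite H1 in_relcomp /=; apply/existsP; exists c; rewrite H2.
- move=> [b /andP[H1]]; rewrite in_relcomp => /existsP[c /andP[H2 H3]].
  by exists c; rewrite H3 in_relcomp andbT; apply/existsP; exists b; rewrite H1.
Qed.

Lemma relcomp_diagr (A B : finType) (S : {set A * B}) : relcomp S (diagset B) = S.
Proof.
apply/setP=> -[a b]; rewrite in_relcomp; apply/existsP/idP.
- by move=> [b' /andP[H]]; rewrite in_diag => /eqP <-.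
- by move=> H; exists b; rewrite H in_diag eqxx.
Qed.

Lemma relcomp_diagl (A B : finType) (S : {set A * B}) : relcomp (diagset A) S = S.
Proof.
apply/setP=> -[a b]; rewrite in_relcomp; apply/existsP/idP.
- by move=> [a' /andP[]]; rewrite in_diag => /eqP ->.
- by move=> H; exists a; rewrite H in_diag eqxx.
Qed.

Lemma trsetK (A B : finType) (S : {set A * B}) : trset (trset S) = S.
Proof. by apply/setP=> -[a b]; rewrite !in_trset. Qed.

Lemma trset_relcomp (A B C : finType) (S : {set A * B}) (T : {set B * C}) :
  trset (relcomp S T) = relcomp (trset T) (trset S).
Proof.
apply/setP=> -[c a]; rewrite in_trset !in_relcomp; apply/existsP/existsP=> -[b H];
by exists b; move: H; rewrite !in_trset andbC.
Qed.

Lemma trset_diag (A : finType) : trset (diagset A) = diagset A.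
Proof. by apply/setP=> -[a b]; rewrite in_trset !in_diag eq_sym. Qed.

Definition full (A B : finType) (S : {set A * B}) := [forall a, exists b, (a, b) \in S].

Lemma keyE (X Y : qspace) (R S : Hom X Y) :
  (relcomp (val R) (trset (val S)) == diagset (vec X)) = (R == S) && full (val R).
Proof.
apply/eqP/andP.
- move=> E.
  have HR : forall x, exists y, ((x, y) \in val R) && ((x, y) \in val S).
    move=> x; have : (x, x) \in relcomp (val R) (trset (val S)) by rewrite E in_diag.
    by rewrite in_relcomp => /existsP[y]; rewrite in_trset; exists y.
  have sub : forall (P Q : Hom X Y), (forall x, exists y, ((x, y) \in val P) && ((x, y) \in val Q))
      -> forall x y, (x, y) \in val P -> (x, y) \in val Q.
    move=> P Q HPQ x y Hxy; have [y' /andP[H1 H2]] := HPQ x.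
    by have := spanD Hxy H1; rewrite addF2vv => /spanl /addv_eq0 ->.
  split; last by apply/forallP=> x; have [y /andP[H _]] := HR x; apply/existsP; exists y.
  apply/eqP/val_inj/setP=> -[x y]; apply/idP/idP; first exact: sub.
  by apply: sub => x'; have [y' /andP[H1 H2]] := HR x'; exists y'; rewrite H1 H2.
- move=> [/eqP <- /forallP Hf]; apply/setP=> -[x x']; rewrite in_relcomp in_diag.
  apply/existsP/eqP.
  + move=> [y /andP[H1]]; rewrite in_trset => H2.
    by have := spanD H1 H2; rewrite addF2vv => /spanr /addv_eq0.
  + move=> <-; have /existsP[y Hy] := Hf x; by exists y; rewrite in_trset Hy.
Qed.


Lemma sum_part (R : nmodType) (I J : finType) (h : I -> J) (Q : pred J) (F : I -> R) :
  \sum_(j | Q j) \sum_(i | h i == j) F i = \sum_(i | Q (h i)) F i.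
Proof.
rewrite (partition_big h Q) //=; apply: eq_bigr=> j Qj; apply: eq_bigl=> i.
by case: eqP => [->|]; rewrite ?andbT ?andbF.
Qed.

Lemma QVactE V X Y T (f : QVobj V X) R :
  QVact V X Y T f R = \sum_(S : Hom V X | relcomp (val S) T == val R) f S.
Proof. by rewrite ffunE. Qed.

Lemma QVact_lin V X Y T : linear (QVact V X Y T).
Proof.
move=> a u v; apply/ffunP=> R; rewrite !ffunE.
rewrite (eq_bigr (fun S => a * u S + v S)); last by move=> S _; rewrite !ffunE.
by rewrite big_split /= -mulr_sumr.
Qed.

Lemma DQactE V X Y (T : Hom X Y) (l : DQobj V X) g :
  DQact V X Y T l g = l (QVact V Y X (trset (val T)) g).
Proof.
rewrite /DQact lfunE_lin // => a u v /=.
by rewrite QVact_lin linearP.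
Qed.

Lemma DQact_lin V X Y (T : Hom X Y) : linear (DQact V X Y T).
Proof.
move=> a l l'; apply/lfunP=> g.
by rewrite add_lfunE scale_lfunE !DQactE add_lfunE scale_lfunE.
Qed.

Lemma phiVE V (g : QVobj V V) : phiV V g = g (idH V).
Proof.
rewrite /phiV lfunE_lin; last first.
  move=> a u v /=.
  rewrite (eq_bigr (fun S => a * u S + v S)); last by move=> S _; rewrite !ffunE.
  by rewrite big_split /= -mulr_sumr.
by rewrite (big_pred1 (idH V)).
Qed.

Lemma aVE V X (f : QVobj V X) :
  aV V X f = \sum_(S : Hom V X) (f S : F2) *: DQact V V X S (phiV V).
Proof.
rewrite /aV lfunE_lin // => a u v /=.
rewrite scaler_sumr -big_split /=; apply: eq_bigr=> S _.
by rewrite !ffunE scalerDl scalerA.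
Qed.

Lemma QVact_comp V X Y Z (T : Hom X Y) (U : Hom Y Z) (g : QVobj V X) :
  QVact V Y Z (val U) (QVact V X Y (val T) g) = QVact V X Z (val (compH T U)) g.
Proof.
apply/ffunP=> R; rewrite !ffunE.
rewrite (eq_bigr (fun R1 => \sum_(S | compH S T == R1) g S)); last first.
  by move=> R1 _; rewrite ffunE; apply: eq_bigl=> S; rewrite -val_eqE.
rewrite (sum_part (fun S => compH S T) (fun R1 => relcomp (val R1) (val U) == val R)).
by apply: eq_bigl=> S /=; rewrite relcompA.
Qed.

Lemma DQact_comp V X Y Z (T : Hom X Y) (U : Hom Y Z) (l : DQobj V X) :
  DQact V Y Z U (DQact V X Y T l) = DQact V X Z (compH T U) l.
Proof.
apply/lfunP=> g; rewrite !DQactE.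
have E := QVact_comp (trH U) (trH T) g.
change (trset (val U)) with (val (trH U)).
change (trset (val T)) with (val (trH T)).
rewrite E; congr (l (QVact _ _ _ _ g)).
change (relcomp (trset (val U)) (trset (val T)) = trset (relcomp (val T) (val U))).
by rewrite trset_relcomp.
Qed.

Lemma DQact_id V X (l : DQobj V X) : DQact V X X (idH X) l = l.
Proof.
apply/lfunP=> g; rewrite DQactE /= trset_diag; congr (l _).
apply/ffunP=> R; rewrite ffunE (big_pred1 R) // => S /=.
by rewrite relcomp_diagr val_eqE.
Qed.

Lemma DQphiE W V (S : Hom W V) (g : QVobj W V) :
  DQact W W V S (phiV W) g =
  \sum_(R : Hom W V | relcomp (val R) (trset (val S)) == diagset (vec W)) g R.
Proof. by rewrite DQactE phiVE ffunE. Qed.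

Definition dirac V X (S : Hom V X) : QVobj V X := [ffun S' => (S' == S)%:R].

Lemma DQ_in_iso V X (S : Hom V X) : DQact V V X S (phiV V) \in isoSp V X.
Proof.
have -> : DQact V V X S (phiV V) = aV V X (dirac S).
  rewrite aVE (bigD1 S) //= big1 => [|S' /negbTE HS]; last by rewrite ffunE HS scale0r.
  by rewrite ffunE eqxx scale1r addr0.
exact/memv_img/memvf.
Qed.

Lemma phiV_in_iso V : phiV V \in isoSp V V.
Proof. by rewrite -{1}(DQact_id (phiV V)) DQ_in_iso. Qed.

Lemma lin_sum (aT rT : vectType F2) (f : aT -> rT) (I : finType) (P : pred I) (F : I -> aT) :
  linear f -> f (\sum_(i | P i) F i) = \sum_(i | P i) f (F i).
Proof.
move=> fL; rewrite -(lfunE_lin fL) linear_sum; apply: eq_bigr=> i _.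
exact: lfunE_lin.
Qed.

Lemma lin0 (aT rT : vectType F2) (f : aT -> rT) :
  linear f -> f 0 = 0.
Proof.
move=> fL; have := fL 1 0 0; rewrite !scale1r addr0 => E.
by apply: (addrI (f 0)); rewrite addr0 -E.
Qed.

Lemma lin_scale (aT rT : vectType F2) (f : aT -> rT) a u :
  linear f -> f (a *: u) = a *: f u.
Proof. by move=> fL; have := fL a u 0; rewrite !addr0 (lin0 fL) addr0. Qed.

Lemma iso_decomp V X (l : DQobj V X) : l \in isoSp V X ->
  exists f : QVobj V X, l = \sum_(S : Hom V X) (f S : F2) *: DQact V V X S (phiV V).
Proof. by move=> /memv_imgP[f _ ->]; exists f; rewrite aVE. Qed.

Lemma DQact_iso V X Y (T : Hom X Y) l :
  l \in isoSp V X -> DQact V X Y T l \in isoSp V Y.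
Proof.
move=> /iso_decomp[f ->]; rewrite lin_sum; last exact: DQact_lin.
apply: rpred_sum=> S _; rewrite lin_scale; last exact: DQact_lin.
by rewrite DQact_comp rpredZ // DQ_in_iso.
Qed.

Definition pV V : isoobj V V := vsproj (isoSp V V) (phiV V).

Lemma vsval_pV V : vsval (pV V) = phiV V.
Proof. by rewrite vsprojK // phiV_in_iso. Qed.

Lemma isoobj_decomp V X (x : isoobj V X) :
  exists f : QVobj V X, x = \sum_(S : Hom V X) (f S : F2) *: isomor S (pV V).
Proof.
have [f Ef] := iso_decomp (subvsP x).
exists f; rewrite -[x]vsvalK Ef linear_sum; apply: eq_bigr=> S _.
by rewrite linearZ /isomor vsval_pV.
Qed.

Lemma nat_eval V W (eta : natfam (isoF V) (isoF W)) : is_nat eta ->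
  forall X (x : isoobj V X), exists f : QVobj V X,
    eta X x = \sum_(S : Hom V X) (f S : F2) *: isomor S (eta V (pV V)).
Proof.
move=> [Hl Hn] X x; have [f ->] := isoobj_decomp x; exists f.
rewrite lin_sum //; apply: eq_bigr=> S _; rewrite lin_scale //.
by have := Hn V X S (pV V); rewrite /= => ->.
Qed.

Lemma nat_ext V W (e1 e2 : natfam (isoF V) (isoF W)) : is_nat e1 -> is_nat e2 ->
  e1 V (pV V) = e2 V (pV V) -> forall X x, e1 X x = e2 X x.
Proof.
move=> H1 H2 E X x; have [f Ef] := isoobj_decomp x.
have [Hl1 Hn1] := H1; have [Hl2 Hn2] := H2.
rewrite Ef !lin_sum //; apply: eq_bigr=> S _; rewrite !lin_scale //.
have := Hn1 V X S (pV V); have := Hn2 V X S (pV V); rewrite /= => -> ->.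
by rewrite E.
Qed.

Lemma nat_zero V W (e : natfam (isoF V) (isoF W)) : is_nat e ->
  e V (pV V) = 0 -> forall X x, e X x = 0.
Proof.
move=> H E X x; have [f ->] := nat_eval H x.
rewrite E big1 // => S _.
have -> : isomor S (0 : isoobj W V) = 0.
  rewrite /isomor.
  have -> : vsval (0 : isoobj W V) = 0 by exact: linear0.
  by rewrite (lin0 (@DQact_lin W V X S)) linear0.
by rewrite scaler0.
Qed.


Definition spf X Y (S : Hom X Y) (x : vec X) : vec Y :=
  odflt 0 [pick y | (x, y) \in val S].

Lemma spf_uniq X Y (S : Hom X Y) x y : (x, y) \in val S -> y = spf S x.
Proof.
rewrite /spf; case: pickP => [y' Hy'|/(_ y) -> //] /= Hy.
by have := spanD Hy Hy'; rewrite addF2vv => /spanl /addv_eq0.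
Qed.

Lemma spfP X Y (S : Hom X Y) x : full (val S) -> (x, spf S x) \in val S.
Proof.
move=> /forallP/(_ x)/existsP[y Hy].
by rewrite -(spf_uniq Hy).
Qed.

Lemma spfD X Y (S : Hom X Y) x x' : full (val S) -> spf S (x + x') = spf S x + spf S x'.
Proof. by move=> Hf; apply/esym/spf_uniq/spanD; apply: spfP. Qed.

Lemma spf0 X Y (S : Hom X Y) : spf S 0 = 0.
Proof. by apply/esym/spf_uniq/span0. Qed.

Lemma spfZ X Y (S : Hom X Y) a x : spf S (a *: x) = a *: spf S x.
Proof. by case: (F2cases a) => ->; rewrite ?scale0r ?scale1r // spf0. Qed.

Lemma spf_sum X Y (S : Hom X Y) (I : finType) (F : I -> vec X) : full (val S) ->
  spf S (\sum_i F i) = \sum_i spf S (F i).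
Proof.
move=> Hf; apply: (big_ind2 (fun a b => spf S a = b)) => //; first exact: spf0.
by move=> a1 a2 b1 b2 <- <-; rewrite spfD.
Qed.

Definition spM X Y (S : Hom X Y) : 'M[F2]_(qdim X, qdim Y) :=
  \matrix_i spf S (delta_mx 0 i).

Lemma spME X Y (S : Hom X Y) u : full (val S) -> u *m spM S = spf S u.
Proof.
move=> Hf; rewrite mulmx_sum_row {2}[u]row_sum_delta spf_sum //.
by apply: eq_bigr=> i _; rewrite rowK spfZ.
Qed.

Lemma spM_mem X Y (S : Hom X Y) u : full (val S) -> (u, u *m spM S) \in val S.
Proof. by move=> Hf; rewrite spME // spfP. Qed.

Lemma spM_uniq X Y (S : Hom X Y) u v : full (val S) -> (u, v) \in val S -> v = u *m spM S.
Proof. by move=> Hf /spf_uniq ->; rewrite spME. Qed.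

Lemma mx_rowE m n (A B : 'M[F2]_(m, n)) : (forall u : 'rV[F2]_m, u *m A = u *m B) -> A = B.
Proof. by move=> H; apply/row_matrixP=> i; rewrite !rowE H. Qed.

Lemma inj_row_free m n (A : 'M[F2]_(m, n)) : (forall u : 'rV[F2]_m, u *m A = 0 -> u = 0) -> row_free A.
Proof.
move=> H; rewrite -kermx_eq0; apply/eqP/row_matrixP=> i; rewrite row0; apply: H.
by rewrite -row_mul mulmx_ker row0.
Qed.

Lemma full_both_qiso V W (S : Hom W V) :
  full (val S) -> full (trset (val S)) -> qiso V W.
Proof.
move=> Hf Ht.
have Ht' : full (val (trH S)) by [].
exists (spM (trH S)), (spM S).
have AB : spM (trH S) *m spM S = 1%:M.
  apply: mx_rowE=> u; rewrite mulmx1 mulmxA.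
  have := spM_mem u Ht'; rewrite /= in_trset => /(spM_uniq Hf) <-. done.
have BA : spM S *m spM (trH S) = 1%:M.
  apply: mx_rowE=> u; rewrite mulmx1 mulmxA.
  have := spM_mem u Hf; rewrite -in_trset => /(spM_uniq Ht') <-. done.
split=> //.
- split; first by apply/row_freeP; exists (spM S).
  move=> x; have := spM_mem x Ht'; rewrite /= => H.
  exact: (spanq (S := trH S) H).
- split; first by apply/row_freeP; exists (spM (trH S)).
  move=> x; exact: spanq (spM_mem x Hf).
Qed.


Definition graphset W V (M : 'M[F2]_(qdim W, qdim V)) : {set vec W * vec V} :=
  [set s | s.2 == s.1 *m M].

Lemma in_graph W V (M : 'M[F2]_(qdim W, qdim V)) w v :
  ((w, v) \in graphset M) = (v == w *m M).
Proof. by rewrite inE. Qed.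

Lemma graph_spanb W V (M : 'M[F2]_(qdim W, qdim V)) : is_Emor W V M -> spanb (graphset M).
Proof.
move=> [HM Hq]; apply: spanbP.
- by rewrite in_graph mul0mx.
- by move=> a b c d; rewrite !in_graph => /eqP-> /eqP->; rewrite mulmxDl.
- by move=> y; rewrite in_graph mul0mx => /eqP.
- move=> x; rewrite in_graph eq_sym => /eqP Hx.
  by apply: (row_free_inj HM); rewrite Hx mul0mx.
- by move=> x y; rewrite in_graph => /eqP->; rewrite Hq.
Qed.

Lemma Emor_ortho W V (B : 'M[F2]_(qdim W, qdim V)) (s : 'M[F2]_(qdim V)) :
  is_Emor W V B -> isometryb s -> is_Emor W V (B *m s).
Proof.
move=> [HB HqB] /andP[Hu /forallP Hs]; split.
- apply: inj_row_free=> u; rewrite mulmxA => H.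
  apply: (row_free_inj HB); rewrite mul0mx.
  by rewrite -(mulmxK Hu (u *m B)) H mul0mx.
- by move=> x; rewrite mulmxA (eqP (Hs _)) HqB.
Qed.

Definition Hsig V W (B : 'M[F2]_(qdim W, qdim V)) (HB : is_Emor W V B) (s : Ortho V)
  : Hom W V :=
  @exist _ (fun S => spanb S) _ (graph_spanb (Emor_ortho HB (valP s))).

Lemma Hsig_full V W B (HB : is_Emor W V B) s : full (val (Hsig HB s)).
Proof. by apply/forallP=> w; apply/existsP; exists (w *m (B *m val s)); rewrite in_graph. Qed.

Lemma Hsig_trfull V W (A : 'M[F2]_(qdim V, qdim W)) B (HB : is_Emor W V B) s :
  A *m B = 1%:M -> full (trset (val (Hsig HB s))).
Proof.
move=> AB; apply/forallP=> v; apply/existsP; exists (v *m invmx (val s) *m A).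
rewrite in_trset in_graph; have /andP[Hu _] := valP s.
by rewrite !mulmxA -(mulmxA _ A) AB mulmx1 mulmxKV.
Qed.

Lemma Hsig_inj V W (A : 'M[F2]_(qdim V, qdim W)) B (HB : is_Emor W V B) s t :
  A *m B = 1%:M -> Hsig HB s = Hsig HB t -> s = t.
Proof.
move=> AB E; apply: val_inj; apply: mx_rowE=> u.
have : (u *m A, u *m A *m (B *m val s)) \in val (Hsig HB t) by rewrite -E in_graph.
by rewrite in_graph !mulmxA -(mulmxA u) AB mulmx1 => /eqP.
Qed.

Lemma Hsig_surj V W (A : 'M[F2]_(qdim V, qdim W)) B (HA : is_Emor V W A) (HB : is_Emor W V B)
  (S : Hom W V) :
  A *m B = 1%:M -> B *m A = 1%:M -> full (val S) -> exists s, Hsig HB s = S.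
Proof.
move=> AB BA Hf.
have Hiso : isometryb (A *m spM S).
  apply/andP; split.
    rewrite -row_free_unit; apply: inj_row_free=> u; rewrite mulmxA spME // => H.
    have := spfP (u *m A) Hf; rewrite H => /spanr Hu.
    by rewrite -[u]mulmx1 -AB mulmxA Hu mul0mx.
  apply/forallP=> x; rewrite mulmxA.
  by rewrite (spanq (spM_mem (x *m A) Hf)) (proj2 HA).
exists (@exist _ (fun M => isometryb M) _ Hiso); apply: val_inj; apply/setP=> -[w v] /=.
rewrite in_graph /= !mulmxA -(mulmxA w B A) BA mulmx1.
apply/eqP/idP=> [->|H]; first exact: spM_mem.
exact: spM_uniq.
Qed.


Definition preG V W X (G : Hom V W) (f : QVobj W X) : QVobj V X :=
  [ffun R' : Hom V X => \sum_(R : Hom W X | relcomp (val G) (val R) == val R') f R].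

Lemma preG_lin V W X (G : Hom V W) : linear (@preG V W X G).
Proof.
move=> a u v; apply/ffunP=> R; rewrite !ffunE.
rewrite (eq_bigr (fun S => a * u S + v S)); last by move=> S _; rewrite !ffunE.
by rewrite big_split /= -mulr_sumr.
Qed.

Definition PhiG V W X (G : Hom V W) (l : DQobj V X) : DQobj W X :=
  linfun (fun g => l (preG G g)).

Lemma PhiGE V W X (G : Hom V W) (l : DQobj V X) g : PhiG G l g = l (preG G g).
Proof. by rewrite /PhiG lfunE_lin // => a u v; rewrite preG_lin linearP. Qed.

Lemma PhiG_lin V W X (G : Hom V W) : linear (@PhiG V W X G).
Proof.
move=> a l l'; apply/lfunP=> g.
by rewrite add_lfunE scale_lfunE !PhiGE add_lfunE scale_lfunE.
Qed.

Lemma preG_nat V W X Y (G : Hom V W) (U : Hom Y X) (g : QVobj W Y) :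
  preG G (QVact W Y X (val U) g) = QVact V Y X (val U) (preG G g).
Proof.
apply/ffunP=> R'; rewrite !ffunE.
rewrite (eq_bigr (fun R => \sum_(S | compH S U == R) g S)); last first.
  by move=> R _; rewrite ffunE; apply: eq_bigl=> S; rewrite -val_eqE.
rewrite (sum_part (fun S => compH S U) (fun R => relcomp (val G) (val R) == val R')).
rewrite (eq_bigr (fun R1 => \sum_(S | compH G S == R1) g S)); last first.
  by move=> R _; rewrite ffunE; apply: eq_bigl=> S; rewrite -val_eqE.
rewrite (sum_part (fun S => compH G S) (fun R1 => relcomp (val R1) (val U) == val R')).
by apply: eq_bigl=> S /=; rewrite relcompA.
Qed.

Lemma PhiG_nat V W X Y (G : Hom V W) (T : Hom X Y) (l : DQobj V X) :
  DQact W X Y T (PhiG G l) = PhiG G (DQact V X Y T l).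
Proof.
apply/lfunP=> g; rewrite DQactE !PhiGE DQactE.
change (trset (val T)) with (val (trH T)).
by rewrite preG_nat.
Qed.

Lemma conj_iff (A B : finType) (G : {set A * B}) (G' : {set B * A}) (K : {set B * A}) :
  relcomp G G' = diagset A -> relcomp G' G = diagset B ->
  (relcomp G K == diagset A) = (relcomp K G == diagset B).
Proof.
move=> E1 E2; apply/eqP/eqP=> H.
- transitivity (relcomp (relcomp G' G) (relcomp K G)); first by rewrite E2 relcomp_diagl.
  by rewrite relcompA -(relcompA G K G) H relcomp_diagl E2.
- transitivity (relcomp (relcomp G K) (relcomp G G')); first by rewrite E1 relcomp_diagr.
  by rewrite relcompA -(relcompA K G G') H relcomp_diagl E1.
Qed.

Lemma PhiG_DQ V W X (G : Hom V W) (S : Hom V X) :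
  relcomp (val G) (trset (val G)) = diagset (vec V) ->
  relcomp (trset (val G)) (val G) = diagset (vec W) ->
  PhiG G (DQact V V X S (phiV V)) = DQact W W X (compH (trH G) S) (phiV W).
Proof.
move=> E1 E2; apply/lfunP=> g; rewrite PhiGE !DQphiE.
rewrite (eq_bigr (fun R1 => \sum_(R | compH G R == R1) g R)); last first.
  by move=> R _; rewrite ffunE; apply: eq_bigl=> S'; rewrite -val_eqE.
rewrite (sum_part (fun R => compH G R)
   (fun R1 => relcomp (val R1) (trset (val S)) == diagset (vec V))).
apply: eq_bigl=> R /=.
rewrite relcompA (conj_iff _ E1 E2) trset_relcomp trsetK.
by rewrite relcompA.
Qed.


Lemma sum_dirac (I : finType) (P : pred I) (j : I) :
  \sum_(i | P i) ((i == j)%:R : F2) = (P j)%:R.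
Proof.
rewrite big_mkcond (bigD1 j) //= eqxx big1 ?addr0; first by case: (P j).
by move=> i /negbTE ->; case: (P i).
Qed.

Lemma DQdirac W V (S R : Hom W V) :
  DQact W W V S (phiV W) (dirac R) = ((R == S) && full (val R))%:R.
Proof.
rewrite DQphiE (eq_bigr (fun R' => ((R' == R)%:R : F2))); last by move=> R' _; rewrite ffunE.
by rewrite (eq_bigl _ _ (fun R' => keyE R' S)) sum_dirac.
Qed.

Lemma DQ_nonfull W V (S : Hom W V) : ~~ full (val S) -> DQact W W V S (phiV W) = 0.
Proof.
move=> NF; apply/lfunP=> g; rewrite DQphiE zero_lfunE big_pred0 // => R.
by rewrite keyE; case: eqP => // ->; apply: negbTE.
Qed.

Lemma full_diag (A : finType) : full (diagset A).
Proof. by apply/forallP=> a; apply/existsP; exists a; rewrite in_diag eqxx. Qed.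

Lemma noniso_case V W : ~ qiso V W ->
  forall eta : natfam (isoF V) (isoF W), is_nat eta ->
  forall X (x : Fobj (isoF V) X), eta X x = 0.
Proof.
move=> NI eta He; apply: (nat_zero He).
have [f Ef] := iso_decomp (subvsP (eta V (pV V))).
have Hf0 : forall S0 : Hom W V, full (val S0) -> f S0 = 0.
  move=> S0 HS0.
  have NT : ~~ full (val (trH S0)).
    by apply/negP=> Ht; apply: NI; exact: full_both_qiso HS0 Ht.
  have Z1 : isomor (trH S0) (pV V) = 0.
    by rewrite /isomor vsval_pV DQ_nonfull // linear0.
  have := (proj2 He) V W (trH S0) (pV V).
  rewrite /= Z1 (lin0 ((proj1 He) W)) => /esym Z2.
  have Z3 : DQact W V W (trH S0) (vsval (eta V (pV V))) = 0.
    rewrite -(vsprojK (DQact_iso (trH S0) (subvsP (eta V (pV V))))).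
    by move: Z2; rewrite /isomor => ->; exact: linear0.
  have := congr1 (fun l : DQobj W W => l (dirac (idH W))) Z3.
  rewrite /= zero_lfunE Ef (lin_sum _ _ (@DQact_lin W V W (trH S0))) sum_lfunE.
  rewrite (bigD1 S0) //= big1 ?addr0.
    rewrite (lin_scale _ _ (@DQact_lin W V W (trH S0))) scale_lfunE DQact_comp DQdirac.
    have -> : (idH W == compH S0 (trH S0)) = true.
      by rewrite eq_sym -val_eqE /= keyE eqxx HS0.
    by rewrite full_diag /= => E; rewrite -E; exact/esym/mulr1.
  move=> S NS.
  rewrite (lin_scale _ _ (@DQact_lin W V W (trH S0))) scale_lfunE DQact_comp DQdirac.
  have -> : (idH W == compH S (trH S0)) = false.
    by rewrite eq_sym -val_eqE /= keyE (negbTE NS).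
  by rewrite /= scaler0.
have Ez : vsval (eta V (pV V)) = 0.
  rewrite Ef big1 // => S _.
  case: (boolP (full (val S))) => HS; first by rewrite Hf0 // scale0r.
  by rewrite DQ_nonfull // scaler0.
by rewrite -[eta V (pV V)]vsvalK Ez linear0.
Qed.


Definition Gs V W B (HB : is_Emor W V B) (s : Ortho V) : Hom V W := trH (Hsig HB s).

Definition PsiF V W B (HB : is_Emor W V B) (c : {ffun Ortho V -> F2}) :
  natfam (isoF V) (isoF W) :=
  fun X x => vsproj (isoSp W X) (\sum_s c s *: PhiG (Gs HB s) (vsval x)).

Lemma Gs_E1 V W (A : 'M[F2]_(qdim V, qdim W)) B (HB : is_Emor W V B) s :
  A *m B = 1%:M ->
  relcomp (val (Gs HB s)) (trset (val (Gs HB s))) = diagset (vec V).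
Proof. by move=> AB; apply/eqP; rewrite keyE eqxx /=; exact: Hsig_trfull AB. Qed.

Lemma Gs_E2 V W B (HB : is_Emor W V B) s :
  relcomp (trset (val (Gs HB s))) (val (Gs HB s)) = diagset (vec W).
Proof.
rewrite /= trsetK; apply/eqP.
by rewrite (keyE (Hsig HB s) (Hsig HB s)) eqxx Hsig_full.
Qed.

Lemma Phi_phi V W (A : 'M[F2]_(qdim V, qdim W)) B (HB : is_Emor W V B) s :
  A *m B = 1%:M ->
  PhiG (Gs HB s) (phiV V) = DQact W W V (Hsig HB s) (phiV W).
Proof.
move=> AB; rewrite -{1}(DQact_id (phiV V)) (PhiG_DQ _ (@Gs_E1 V W A B HB s AB) (@Gs_E2 V W B HB s)).
congr (DQact _ _ _ _ _); apply: val_inj.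
by rewrite /= trsetK relcomp_diagr.
Qed.

Lemma Phi_iso V W (A : 'M[F2]_(qdim V, qdim W)) B (HB : is_Emor W V B) s X l :
  A *m B = 1%:M -> l \in isoSp V X -> PhiG (Gs HB s) l \in isoSp W X.
Proof.
move=> AB /iso_decomp[f ->].
rewrite (lin_sum _ _ (@PhiG_lin V W X (Gs HB s))); apply: rpred_sum=> S _.
rewrite (lin_scale _ _ (@PhiG_lin V W X (Gs HB s))).
by rewrite (PhiG_DQ _ (@Gs_E1 V W A B HB s AB) (@Gs_E2 V W B HB s)) rpredZ // DQ_in_iso.
Qed.

Lemma SumIn V W (A : 'M[F2]_(qdim V, qdim W)) B (HB : is_Emor W V B) c X l :
  A *m B = 1%:M -> l \in isoSp V X ->
  \sum_s c s *: PhiG (Gs HB s) l \in isoSp W X.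
Proof.
by move=> AB Hl; apply: rpred_sum=> s _; rewrite rpredZ // (@Phi_iso V W A B HB s X l AB).
Qed.

Lemma Psi_nat V W (A : 'M[F2]_(qdim V, qdim W)) B (HB : is_Emor W V B) c :
  A *m B = 1%:M -> is_nat (PsiF HB c).
Proof.
move=> AB; split.
- move=> X a x y; rewrite /PsiF -linearP; congr (vsproj _ _).
  rewrite linearP scaler_sumr -big_split /=; apply: eq_bigr=> s _.
  by rewrite PhiG_lin scalerDr !scalerA mulrC.
- move=> X Y T x; rewrite /= /PsiF /isomor.
  rewrite vsprojK; last exact: DQact_iso (subvsP x).
  rewrite vsprojK; last exact: (@SumIn V W A B HB c X _ AB (subvsP x)).
  congr (vsproj _ _).
  rewrite (lin_sum _ _ (@DQact_lin W X Y T)); apply: eq_bigr=> s _.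
  by rewrite (lin_scale _ _ (@DQact_lin W X Y T)) PhiG_nat.
Qed.

Arguments PsiF {V W B} HB c X x.

Lemma Psi_linc V W B (HB : is_Emor W V B) (a : F2) (c c' : {ffun Ortho V -> F2}) X (x : isoobj V X) :
  PsiF HB [ffun g => a * c g + c' g] X x = a *: PsiF HB c X x + PsiF HB c' X x.
Proof.
rewrite /PsiF -linearP; congr (vsproj _ _).
rewrite scaler_sumr -big_split /=; apply: eq_bigr=> s _.
by rewrite ffunE scalerDl scalerA.
Qed.

Lemma PsiV V W (A : 'M[F2]_(qdim V, qdim W)) B (HB : is_Emor W V B) c :
  A *m B = 1%:M ->
  PsiF HB c V (pV V) =
  vsproj (isoSp W V) (\sum_s c s *: DQact W W V (Hsig HB s) (phiV W)).
Proof.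
move=> AB; rewrite /PsiF vsval_pV; congr (vsproj _ _); apply: eq_bigr=> s _.
by rewrite (Phi_phi _ _ AB).
Qed.

Lemma sum_reidx V W (A : 'M[F2]_(qdim V, qdim W)) B (HA : is_Emor V W A) (HB : is_Emor W V B)
  (f : QVobj W V) :
  A *m B = 1%:M -> B *m A = 1%:M ->
  \sum_(S : Hom W V) (f S : F2) *: DQact W W V S (phiV W) =
  \sum_s f (Hsig HB s) *: DQact W W V (Hsig HB s) (phiV W).
Proof.
move=> AB BA.
rewrite (bigID (fun S => full (val S))) /= [X in _ + X]big1 ?addr0; last first.
  by move=> S /DQ_nonfull ->; rewrite scaler0.
rewrite (eq_bigl (fun s => full (val (Hsig HB s)))); last by move=> s; rewrite Hsig_full.
rewrite -(sum_part (Hsig HB) (fun S => full (val S))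
   (fun s => f (Hsig HB s) *: DQact W W V (Hsig HB s) (phiV W))).
apply: eq_bigr=> S HS.
have [s0 Hs0] := Hsig_surj HA HB AB BA HS.
rewrite (big_pred1 s0) ?Hs0 // => s /=.
rewrite -Hs0; apply/eqP/eqP=> [E|->//].
exact: (Hsig_inj AB E).
Qed.

Lemma eval_sum V W (A : 'M[F2]_(qdim V, qdim W)) B (HB : is_Emor W V B) c s :
  A *m B = 1%:M ->
  (\sum_t c t *: DQact W W V (Hsig HB t) (phiV W)) (dirac (Hsig HB s)) = c s.
Proof.
move=> AB; rewrite sum_lfunE (bigD1 s) //= big1 ?addr0.
  by rewrite scale_lfunE DQdirac eqxx Hsig_full /=; exact: mulr1.
move=> t Nts; rewrite scale_lfunE DQdirac.
have -> : (Hsig HB s == Hsig HB t) = false.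
  by apply/negbTE/negP=> /eqP /(Hsig_inj AB) E; rewrite E eqxx in Nts.
by rewrite /= scaler0.
Qed.

Lemma iso_case V W (A : 'M[F2]_(qdim V, qdim W)) B (HA : is_Emor V W A) (HB : is_Emor W V B) :
  A *m B = 1%:M -> B *m A = 1%:M ->
     exists Psi : {ffun Ortho V -> F2} -> natfam (isoF V) (isoF W),
       [/\ forall c, is_nat (Psi c),
           forall eta : natfam (isoF V) (isoF W), is_nat eta ->
             exists! c : {ffun Ortho V -> F2},
               forall X (x : Fobj (isoF V) X), eta X x = Psi c X x
         & forall (a : F2) (c c' : {ffun Ortho V -> F2}) X
                  (x : Fobj (isoF V) X),
             Psi [ffun g => a * c g + c' g] X x
             = a *: Psi c X x + Psi c' X x].
Proof.
move=> AB BA; exists (PsiF HB); split.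
- by move=> c; exact: (Psi_nat _ _ AB).
- move=> eta He.
  have [f Ef] := iso_decomp (subvsP (eta V (pV V))).
  have Ee : eta V (pV V) = PsiF HB [ffun s => f (Hsig HB s)] V (pV V).
    rewrite (PsiV _ _ AB) -[eta V (pV V)]vsvalK Ef (sum_reidx HA HB f AB BA).
    by congr (vsproj _ _); apply: eq_bigr=> s _; rewrite ffunE.
  exists [ffun s => f (Hsig HB s)]; split.
    exact: (nat_ext He (Psi_nat _ _ AB) Ee).
  move=> c' Hc'; have E2 := Hc' V (pV V); rewrite Ee !(PsiV _ _ AB) in E2.
  have E3 := congr1 vsval E2; rewrite !vsprojK in E3; first last.
  + by apply: rpred_sum=> s _; rewrite rpredZ // DQ_in_iso.
  + by apply: rpred_sum=> s _; rewrite rpredZ // DQ_in_iso.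
  apply/ffunP=> s.
  have := congr1 (fun l : DQobj W V => l (dirac (Hsig HB s))) E3.
  by rewrite /= !(eval_sum _ _ _ AB).
- move=> a c c' X x; exact: Psi_linc.
Qed.


Theorem corollary4p33 (V W : qspace) :
  (qiso V W ->
     exists Psi : {ffun Ortho V -> F2} -> natfam (isoF V) (isoF W),
       [/\ forall c, is_nat (Psi c),
           forall eta : natfam (isoF V) (isoF W), is_nat eta ->
             exists! c : {ffun Ortho V -> F2},
               forall X (x : Fobj (isoF V) X), eta X x = Psi c X x
         & forall (a : F2) (c c' : {ffun Ortho V -> F2}) X
                  (x : Fobj (isoF V) X),
             Psi [ffun g => a * c g + c' g] X x
             = a *: Psi c X x + Psi c' X x])
  /\
  (~ qiso V W ->
     forall eta : natfam (isoF V) (isoF W), is_nat eta ->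
       forall X (x : Fobj (isoF V) X), eta X x = 0).
Proof.
split.
- move=> [A [B [HA HB AB BA]]]; exact: iso_case HA HB AB BA.
- exact: noniso_case.
Qed.
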